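(* Let $p:\mathcal P\to[1,\infty]$ be measurable, let $E\subset\mathcal P$ be measurable with $\mu(E)<\infty$, and let $E_n=\{x\in E:p(x)>n\}$, $n=1,2,\dots$. Then $$e^{p(\cdot)}\in\bigcap_{q\in[1,\infty)}L^q(E)\quad\iff\quad\|\chi_{E_n}\|_{L^{p(\cdot)}(E)}\to0\ \text{ as } n\to\infty.$$ Moreover, if $\|e^{p(\cdot)}\|_{L^{q_0}(E)}=\infty$ for some $q_0\in[1,\infty)$, then $\|\chi_{E_n}\|_{L^{p(\cdot)}(E)}\ge e^{-q_0}$ for every $n=1,2,\dots$.
   Context: $(\mathcal P,\mu)$ is a measure space (in the paper, a metric space with a positive complete Borel measure). For measurable $E$ and $p:E\to[1,\infty]$, the Luxemburg norm is $\|f\|_{L^{p(\cdot)}(E)}=\inf\{\lambda>0:\int_E(|f(x)|/\lambda)^{p(x)}\,d\mu(x)\le1\}$, with the convention $a^\infty=0$ for $0\le a<1$, $1^\infty=1$, and $a^\infty=\infty$ for $a>1$. *)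

(* Defs.v *)
From HB Require Import structures.
From mathcomp Require Import all_boot all_order all_algebra.
From mathcomp Require Import all_classical all_reals all_analysis measurable_realfun.
Set Implicit Arguments. Unset Strict Implicit. Unset Printing Implicit Defensive.
Import Order.TTheory GRing.Theory Num.Theory.
Local Open Scope classical_set_scope.
Local Open Scope ring_scope.

(* a^q for a >= 0 real and q : \bar R exponent, with the convention
   a^oo = 0 if a < 1, 1^oo = 1, a^oo = oo if a > 1.  (q = -oo never occurs,
   since exponents take values in [1, oo]; we set it to 0.) *)
Definition vpow {R : realType} (a : R) (q : \bar R) : \bar R :=
  match q with
  | r%:E => (a `^ r)%:E
  | +oo%E => if a < 1 then 0%E else if a == 1 then 1%E else +oo%E
  | -oo%E => 0%E
  end.

Definition vmodular {d} {T : measurableType d} {R : realType}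
  (mu : {measure set T -> \bar R}) (E : set T) (p : T -> \bar R) (f : T -> R) : \bar R :=
  (\int[mu]_(x in E) vpow `|f x| (p x))%E.

(* Luxemburg norm ||f||_{L^{p(.)}(E)} = inf {lambda > 0 : rho(f/lambda) <= 1}
   (inf of the empty set = +oo) *)
Definition luxemburg_norm {d} {T : measurableType d} {R : realType}
  (mu : {measure set T -> \bar R}) (E : set T) (p : T -> \bar R) (f : T -> R) : \bar R :=
  ereal_inf [set l%:E | l in [set l : R | 0 < l /\
     (vmodular mu E p (fun x => (f x / l)%R) <= 1)%E]].

Definition eLq_norm {d} {T : measurableType d} {R : realType}
  (mu : {measure set T -> \bar R}) (E : set T) (g : T -> \bar R) (q : R) : \bar R :=
  poweR (\int[mu]_(x in E) poweR `|g x|%E q)%E q^-1.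

Definition in_eLq {d} {T : measurableType d} {R : realType}
  (mu : {measure set T -> \bar R}) (E : set T) (g : T -> \bar R) (q : R) : Prop :=
  measurable_fun E g /\ (eLq_norm mu E g q < +oo)%E.

(* Main.v *)
Require Import Defs.
From HB Require Import structures.
From mathcomp Require Import all_boot all_order all_algebra.
From mathcomp Require Import all_classical all_reals all_analysis measurable_realfun.
From mathcomp Require Import lra.
Import Order.TTheory GRing.Theory Num.Theory.
Local Open Scope classical_set_scope.
Local Open Scope ring_scope.

Lemma measurable_expeR (R : realType) : measurable_fun [set: \bar R] (@expeR R).
Proof.
have -> : @expeR R = (fun x => if x == +oo%E then +oo%E else
   if x == -oo%E then 0%E else (expR (fine x))%:E).
  by apply/funext => -[r| |].
apply: measurable_fun_ifT => //=; first exact: measurable_fun_eqe.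
apply: measurable_fun_ifT => //=; first exact: measurable_fun_eqe.
apply/measurable_EFinP => //=.
exact: measurableT_comp (@measurable_expR R) _.
Qed.

Lemma vpow_gt1 (R : realType) (c : R) (y : \bar R) : 1 < c -> (1 <= y)%E ->
  vpow c y = expeR (y * (ln c)%:E).
Proof.
move=> c1; case: y => [r| |] //= r1.
  rewrite /powR gt_eqF ?(lt_trans _ c1) // -EFinM /= mulrC //.
rewrite ltNge (ltW c1) /= gt_eqF // mulyr gtr0_sg ?ln_gt0 // mul1e.
reflexivity.
Qed.

Lemma vpow0 (R : realType) (y : \bar R) : (1 <= y)%E -> vpow 0 y = 0%E.
Proof.
case: y => [r| |] //= r1; last by rewrite ltr01.
by rewrite powR0 // gt_eqF // (lt_le_trans ltr01) // -lee_fin.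
Qed.

Lemma poweR_expeR (R : realType) (y : \bar R) (q : R) : 0 < q ->
  (expeR y `^ q)%E = expeR (q%:E * y).
Proof.
move=> q0; case: y => [r| |].
- change (expeR r%:E) with (expR r)%:E.
  by rewrite poweR_EFin -expRM mulrC -EFinM.
- change (expeR +oo) with (+oo : \bar R)%E.
  by rewrite poweRyr ?gt_eqF // mulry gtr0_sg // mul1e.
- change (expeR -oo) with (0 : \bar R)%E.
  by rewrite poweR0r ?gt_eqF // mulrNy gtr0_sg // mul1e.
Qed.

Section S.
Context d (T : measurableType d) (R : realType) (mu : {measure set T -> \bar R})
  (p : T -> \bar R) (E : set T).
Hypothesis hp : measurable_fun setT p.
Hypothesis hp1 : forall x, (1 <= p x)%E.
Hypothesis hE : measurable E.
Hypothesis hmuE : (mu E < +oo)%E.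
Let En := fun n : nat => [set x | E x /\ ((n%:R)%:E < p x)%E].

Lemma mpE : measurable_fun E p.
Proof. exact: measurable_funS hp. Qed.

Lemma mEn n : measurable (En n).
Proof.
have -> : En n = E `&` [set x | ((cst (n%:R%:E : \bar R)) x < p x)%E] by [].
apply: measurable_lte => //; exact: mpE.
Qed.

Lemma mG (q : R) : measurable_fun E (fun x => expeR (q%:E * p x)).
Proof.
apply: measurableT_comp (@measurable_expeR R) _.
exact: measurable_funeM mpE.
Qed.

Lemma mk (c : R) n : measurable_fun E
  (fun x => expeR (p x * c%:E) * (\1_(En n) x)%:E)%E.
Proof.
apply: emeasurable_funM.
  apply: measurableT_comp (@measurable_expeR R) _.
  by apply: emeasurable_funM; [exact: mpE|exact: measurable_cst].
apply/measurable_EFinP; exact: measurable_indic (mEn n).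
Qed.

Lemma modularE (l : R) n : 0 < l -> l < 1 ->
  vmodular mu E p (fun x => (\1_(En n) x / l)%R) =
  (\int[mu]_(x in E) (expeR (p x * (ln l^-1)%:E) * (\1_(En n) x)%:E))%E.
Proof.
move=> l0 l1; apply: eq_integral => x _.
rewrite /indic; case: (x \in En n).
  rewrite mul1r ger0_norm ?invr_ge0 ?ltW // vpow_gt1 ?invf_gt1 //.
  by rewrite mule1.
by rewrite mul0r normr0 vpow0 // mule0.
Qed.

Lemma lemA (q : R) n : 0 < q ->
  (luxemburg_norm mu E p (\1_(En n) : T -> R) < (expR (- q))%:E)%E ->
  (\int[mu]_(x in E) expeR (q%:E * p x) < +oo)%E.
Proof.
move=> q0 /ereal_inf_lt [_ [l [l0 hmod] <-]]; rewrite lte_fin => lq.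
have l1 : l < 1 by rewrite (lt_trans lq) // expR_lt1 oppr_lt0.
have lnc : q < ln l^-1.
  by rewrite lnV ?posrE // ltrNr -ltr_expR lnK ?posrE.
rewrite modularE // in hmod.
set C := expR (q * n%:R).
apply: (@le_lt_trans _ _ (\int[mu]_(x in E)
   ((expeR (p x * (ln l^-1)%:E) * (\1_(En n) x)%:E) + C%:E))%E).
  apply: ge0_le_integral => //.
  - by move=> x _; exact: expeR_ge0.
  - exact: mG.
  - by apply: emeasurable_funD; [exact: mk|exact: measurable_cst].
  move=> x Ex; rewrite /indic; case: (boolP (x \in En n)) => hx.
    rewrite mule1; apply: lee_paddr; first by rewrite lee_fin expR_ge0.
    rewrite lee_expeR [X in (_ <= X)%E]muleC; apply: lee_wpmul2r.
      exact: le_trans (hp1 x).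
    by rewrite lee_fin ltW.
  move: hx; rewrite notin_setE /En /= => hx.
  have hpn : (p x <= n%:R%:E)%E by rewrite leNgt; apply/negP => h; apply: hx.
  rewrite mule0 add0e.
  move: (hp1 x) hpn; case: (p x) => [r| |] //= r1 rn.
  rewrite lee_fin ler_expR ler_pM2l //.
rewrite ge0_integralD //.
- rewrite integral_cst //; apply: lte_add_pinfty; first by apply: le_lt_trans hmod _; exact: ltry.
  by apply: lte_mul_pinfty => //; rewrite lee_fin expR_ge0.
- by move=> x _; apply: mule_ge0; [exact: expeR_ge0|rewrite lee_fin /indic; case: (_ \in _)].
- exact: mk.
- by move=> x _; rewrite lee_fin expR_ge0.
Qed.

Lemma lemB (q : R) : 0 < q ->
  (\int[mu]_(x in E) expeR ((q + 1)%:E * p x) < +oo)%E ->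
  \forall n \near \oo,
    (luxemburg_norm mu E p (\1_(En n) : T -> R) <= (expR (- q))%:E)%E.
Proof.
move=> q0 hI.
set I := (\int[mu]_(x in E) _)%E in hI.
have I0 : (0 <= I)%E by apply: integral_ge0 => x _; exact: expeR_ge0.
have [r Ir] : exists r, I = r%:E.
  by exists (fine I); rewrite fineK // ge0_fin_numE.
exists (Num.truncn r).+1 => // n /= hn.
have rn : r <= n%:R.
  by rewrite (le_trans (ltW (truncnS_gt r))) // ler_nat.
set l := expR (- q).
have l0 : 0 < l by exact: expR_gt0.
have l1 : l < 1 by rewrite expR_lt1 oppr_lt0.
apply: ereal_inf_lbound; exists l => //; split => //.
rewrite modularE //.
have -> : ln l^-1 = q by rewrite lnV ?posrE // expRK opprK.
apply: (@le_trans _ _ (\int[mu]_(x in E) ((expR (- n%:R))%:E * expeR ((q + 1)%:E * p x)))%E).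
  apply: ge0_le_integral => //.
  - by move=> x _; apply: mule_ge0; [exact: expeR_ge0|rewrite lee_fin /indic; case: (_ \in _)].
  - exact: mk.
  - by apply: measurable_funeM; exact: mG.
  move=> x Ex; rewrite /indic; case: (boolP (x \in En n)) => hx; last first.
    by rewrite mule0; apply: mule_ge0; [rewrite lee_fin expR_ge0|exact: expeR_ge0].
  move: hx; rewrite in_setE /En /= => -[_ hx].
  rewrite mule1.
  move: hx; case: (p x) => [s| |] //= hs.
    rewrite -!EFinM lee_fin -expRD ler_expR mulrDl mul1r.
    rewrite lte_fin in hs; lra.
  rewrite mulyr gtr0_sg // mul1e mulry gtr0_sg ?addr_gt0 // mul1e.
  change (expeR +oo) with (+oo : \bar R)%E.
  by rewrite mulry gtr0_sg ?expR_gt0 // mul1e.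
rewrite ge0_integralZl //; try exact: mG; try (by move=> x _; exact: expeR_ge0);
  try (by rewrite lee_fin expR_ge0).
rewrite -/I Ir -EFinM lee_fin expRN mulrC ler_pdivrMr ?expR_gt0 // mul1r.
apply: (le_trans rn); apply: (le_trans _ (expR_ge1Dx _)); lra.
Qed.

Lemma eLqE (q : R) : 0 < q ->
  eLq_norm mu E (fun x => expeR (p x)) q =
  ((\int[mu]_(x in E) expeR (q%:E * p x)) `^ q^-1)%E.
Proof.
move=> q0; rewrite /eLq_norm; congr (_ `^ _)%E; apply: eq_integral => x _.
by rewrite gee0_abs ?expeR_ge0 // poweR_expeR.
Qed.

Lemma eLq_lt (q : R) : 0 < q ->
  (eLq_norm mu E (fun x => expeR (p x)) q < +oo)%E <->
  (\int[mu]_(x in E) expeR (q%:E * p x) < +oo)%E.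
Proof.
move=> q0; rewrite eLqE //; split; last exact: poweR_lty.
by apply: lty_poweRy; rewrite invr_eq0 gt_eqF.
Qed.

Lemma Nge0 n : (0 <= luxemburg_norm mu E p (\1_(En n) : T -> R))%E.
Proof.
apply: le_ereal_inf_tmp => _ [l [l0 _] <-]; by rewrite lee_fin ltW.
Qed.

End S.

Theorem proposition8p1 (d : measure_display) (T : measurableType d) (R : realType)
  (mu : {measure set T -> \bar R}) (p : T -> \bar R) (E : set T)
  (hp : measurable_fun setT p) (hp1 : forall x, (1 <= p x)%E)
  (hE : measurable E) (hmuE : (mu E < +oo)%E) :
  let En := fun n : nat => [set x | E x /\ ((n%:R)%:E < p x)%E] in
  ((forall q : R, 1 <= q -> in_eLq mu E (fun x => expeR (p x)) q) <->
     ((fun n => luxemburg_norm mu E p (\1_(En n) : T -> R)) @ \oo --> 0%E)) /\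
  (forall q0 : R, 1 <= q0 ->
     eLq_norm mu E (fun x => expeR (p x)) q0 = +oo%E ->
     forall n : nat, (0 < n)%N ->
       ((expR (- q0))%:E <= luxemburg_norm mu E p (\1_(En n) : T -> R))%E).
Proof.
move=> En; split; last first.
  move=> q0 q01 Hoo n _; rewrite leNgt; apply/negP => hlt.
  have q0p : 0 < q0 by exact: lt_le_trans ltr01 q01.
  have := @lemA _ _ _ mu p E hp hp1 hE hmuE q0 n q0p hlt.
  by rewrite -eLq_lt // Hoo ltxx.
split.
  move=> H.
  have B : forall q : R, 0 < q -> \forall n \near \oo,
      (luxemburg_norm mu E p (\1_(En n) : T -> R) <= (expR (- q))%:E)%E.
    move=> q q0; apply: lemB => //.
    have q1 : 1 <= q + 1 by rewrite lerDr ltW.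
    have [_ ] := H (q + 1) q1.
    by rewrite eLq_lt // (lt_le_trans ltr01 q1).
  apply/fine_cvgP; split.
    apply: filterS (B 1 ltr01) => n hn.
    by rewrite ge0_fin_numE ?Nge0 // (le_lt_trans hn) // ltry.
  apply/cvgrPdist_le => e e0.
  set q := Num.max 1 (- ln e).
  have q0 : 0 < q by rewrite lt_max ltr01.
  have qe : - ln e <= q by rewrite le_max lexx orbT.
  apply: filterS (B q q0) => n hn /=.
  have hf : luxemburg_norm mu E p (\1_(En n) : T -> R) \is a fin_num.
    by rewrite ge0_fin_numE ?Nge0 // (le_lt_trans hn) // ltry.
  rewrite sub0r normrN ger0_norm ?fine_ge0 ?Nge0 //.
  rewrite -lee_fin fineK // (le_trans hn) // lee_fin.
  rewrite -[X in _ <= X](lnK e0) ler_expR; lra.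
move=> H q q1.
have q0 : 0 < q by exact: lt_le_trans ltr01 q1.
split.
  exact: measurableT_comp (@measurable_expeR R) (@mpE _ _ _ p E hp).
rewrite eLq_lt //.
move/fine_cvgP: H => [Hfin Hc].
have := cvgr_lt _ Hc _ (expR_gt0 (- q)).
case: Hfin => N1 _ H1 [N2 _ H2].
have hn1 : (N1 <= maxn N1 N2)%N by rewrite leq_maxl.
have hn2 : (N2 <= maxn N1 N2)%N by rewrite leq_maxr.
have hf := H1 _ hn1; have hl := H2 _ hn2.
apply: (@lemA _ _ _ mu p E hp hp1 hE hmuE q (maxn N1 N2) q0).
by rewrite -(fineK hf) lte_fin.
Qed.
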